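(* Let $t_1,\dots,t_N\in\mathbb{C}$ be pairwise distinct, let $B_1,\dots,B_N$ be constant complex $M\times M$ matrices, and let $y$ be a $\mathbb{C}^M$-valued function satisfying $D_xy=\sum_{i=1}^N\frac{B_i}{x-t_i}\,y$. Put $Y_0={}^{\mathrm T}\!\left[\frac{y}{x-t_1},\dots,\frac{y}{x-t_N}\right]\in\mathbb{C}^{MN}$. Then $Y_0$ satisfies the $q$-Okubo type system $$\Big(xI-\tfrac{1}{q}S\Big)D_xY_0=\tfrac1q(B-I)Y_0,$$ where $S=\mathrm{diag}(t_1I_M,\dots,t_NI_M)$ (block diagonal, $MN\times MN$) and $B$ is the $MN\times MN$ block matrix all of whose $N$ block rows equal $[B_1\ B_2\ \cdots\ B_N]$.
   Context: Fix $q\in\mathbb{C}$ with $0<|q|<1$. $D_xf(x)=\frac{f(x)-f(qx)}{(1-q)x}$, applied componentwise to vector-valued functions. $I$ denotes the identity matrix of the appropriate size. *)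

(* Defs.v *)
From HB Require Import structures.
From mathcomp Require Import all_boot all_order all_algebra.
From mathcomp Require Import reals complex.
Set Implicit Arguments. Unset Strict Implicit. Unset Printing Implicit Defensive.
Import Order.TTheory GRing.Theory Num.Theory.
Local Open Scope ring_scope.

Definition Cplx (R : realType) := R[i].

Definition qD (C : fieldType) (q : C) (m n : nat) (f : C -> 'M[C]_(m, n)) (x : C)
  : 'M[C]_(m, n) := ((1 - q) * x)^-1 *: (f x - f (q * x)).

(* Main.v *)
Require Import Defs.
From HB Require Import structures.
From mathcomp Require Import all_boot all_order all_algebra.
From mathcomp Require Import reals complex.
From mathcomp Require Import ring.
Import Order.TTheory GRing.Theory Num.Theory.
Local Open Scope ring_scope.

Lemma mxcolZ' (C : pzRingType) (N M m : nat) (a : C) (C_ : 'I_N -> 'M[C]_(M, m)) :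
  a *: \mxcol_i C_ i = \mxcol_i (a *: C_ i).
Proof. by apply/matrixP => s j; rewrite !mxE. Qed.

Theorem mainTheorem2 (R : realType) (q : Cplx R) (M N : nat)
  (t : 'I_N -> Cplx R) (Bs : 'I_N -> 'M[Cplx R]_M) (y : Cplx R -> 'cV[Cplx R]_M) :
  0 < `|q| -> `|q| < 1 ->
  injective t ->
  (forall x : Cplx R, x != 0 -> (forall i, x != t i) -> (forall i, q * x != t i) ->
     qD q y x = \sum_(i < N) ((x - t i)^-1 *: Bs i) *m y x) ->
  let Y0 : Cplx R -> 'cV[Cplx R]_(\sum_(i < N) M) :=
    fun x => \mxcol_(i < N) ((x - t i)^-1 *: y x) in
  let S : 'M[Cplx R]_(\sum_(i < N) M) := \mxdiag_(i < N) (t i)%:M in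
  let B : 'M[Cplx R]_(\sum_(i < N) M) := \mxblock_(i < N, j < N) Bs j in
  forall x : Cplx R, x != 0 -> (forall i, x != t i) -> (forall i, q * x != t i) ->
    (x *: 1%:M - q^-1 *: S) *m qD q Y0 x = q^-1 *: ((B - 1%:M) *m Y0 x).
Proof.
move=> q0 q1 _ hy Y0 S B x x0 xt qxt.
have hq : q != 0 by rewrite -normr_gt0.
have h1q : 1 - q != 0.
  by apply/eqP => /eqP; rewrite subr_eq0 => /eqP h; move: q1; rewrite -h normr1 ltxx.
rewrite mulmxBl -!scalemxAl mul1mx mulmxBl mul1mx.
rewrite /S /qD /Y0 -mxcolB mxcolZ' mul_mxdiag_mxcol /B mxblockEv mxcol_mul.
rewrite (@mxcolZ' _ _ _ _ x).
rewrite (@mxcolZ' _ _ _ _ q^-1).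
rewrite -mxcolB.
rewrite -mxcolB mxcolZ'.

apply: eq_mxcol => i.
rewrite mul_mxrow_mxcol.
under eq_bigr do rewrite -scalemxAr scalemxAl.
rewrite -hy // /qD mul_scalar_mx.
apply/matrixP => a b; rewrite !mxE.
have hxt : x - t i != 0 by rewrite subr_eq0.
have hqxt : q * x - t i != 0 by rewrite subr_eq0.
field.
by rewrite hq h1q x0 hxt hqxt.
Qed.
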